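(* Let $K\ge3$ be an integer and $\alpha\in(2,+\infty)$. For every $\varepsilon>0$ there exist $p,q\in\operatorname{relint}(\Delta^K)$ such that \[ D_\alpha(p\Vert q)<\varepsilon\cdot\|p-q\|_1^2 . \]
   Context: $\Delta^K=\{p\in[0,1]^K:\sum_k p_k=1\}$, $\operatorname{relint}(\Delta^K)=\Delta^K\cap(0,1)^K$. For $p,q\in(0,+\infty)^K$ and $\alpha\notin\{0,1\}$, $D_\alpha(p\Vert q)=\frac1\alpha\sum_{k=1}^K\frac{p_k^\alpha+(\alpha-1)q_k^\alpha-\alpha p_kq_k^{\alpha-1}}{\alpha-1}$, which is the Bregman divergence of $-S_\alpha$ where $S_\alpha(p)=\frac{\sum_kp_k^\alpha}{\alpha(1-\alpha)}$. $\|x\|_1=\sum_k|x_k|$. *)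

(* Defs.v *)
From mathcomp Require Import all_boot all_order all_algebra.
From mathcomp Require Import all_classical all_reals all_analysis.
Set Implicit Arguments. Unset Strict Implicit. Unset Printing Implicit Defensive.
Import Order.TTheory GRing.Theory Num.Theory.
Local Open Scope ring_scope.

Definition relint_simplex (R : realType) (K : nat) (p : 'I_K -> R) : Prop :=
  (forall k, 0 < p k < 1) /\ \sum_(k < K) p k = 1.

Definition alpha_div (R : realType) (K : nat) (alpha : R) (p q : 'I_K -> R) : R :=
  alpha^-1 * \sum_(k < K)
    ((p k `^ alpha + (alpha - 1) * q k `^ alpha
      - alpha * p k * q k `^ (alpha - 1)) / (alpha - 1)).

Definition l1_dist (R : realType) (K : nat) (p q : 'I_K -> R) : R :=
  \sum_(k < K) `|p k - q k|.

(* Main.v *)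
Require Import Defs.
From mathcomp Require Import all_boot all_order all_algebra.
From mathcomp Require Import all_classical all_reals all_analysis.
From mathcomp Require Import ring lra.
Import Order.TTheory GRing.Theory Num.Theory.
Local Open Scope ring_scope.

Lemma sum3 (R : realType) n (F : nat -> R) :
  \sum_(k < n.+3) F k = F 0%N + F 1%N + \sum_(2 <= i < n.+3) F i.
Proof.
by rewrite -(big_mkord xpredT F) big_ltn // big_ltn // addrA.
Qed.

Lemma tail3 (R : realType) n (F : nat -> R) c :
  (forall i, (2 <= i)%N -> F i = c) -> \sum_(2 <= i < n.+3) F i = c *+ n.+1.
Proof.
move=> H; rewrite (eq_big_nat _ _ (F2 := fun=> c)); first by rewrite sumr_const_nat.
by move=> i /andP[/H].
Qed.

Lemma alg (R : realType) (a X Y Z W t s : R) : a - 1 != 0 -> a != 0 ->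
  a^-1 * ((W + (a - 1) * Z - a * t * X) / (a - 1) + (Z + (a - 1) * W - a * s * Y) / (a - 1))
  = (Z + W - t * X - s * Y) / (a - 1).
Proof. by move=> h1 h2; field; rewrite h1 h2. Qed.

Arguments sum3 {R n} F.
Arguments tail3 {R n F c}.

Theorem theorem2 (R : realType) (K : nat) (alpha : R) :
  (3 <= K)%N -> 2 < alpha ->
  forall eps : R, 0 < eps ->
  exists p q : 'I_K -> R,
    relint_simplex p /\ relint_simplex q /\
    alpha_div alpha p q < eps * (l1_dist p q) ^+ 2.
Proof.
move=> K3 a2 eps eps0.
have [n ->] : exists n, K = n.+3 by exists (K - 3)%N; rewrite -addn3 subnK.
move: alpha a2 => a a2.
have a1 : 1 < a by lra.
have a0 : 0 < a by lra.
have a20 : 0 < a - 2 by lra.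
set c := eps * (a - 1) / 4.
have c0 : 0 < c by rewrite /c divr_gt0 // mulr_gt0 // subr_gt0.
set s := Num.min (2^-1) (c `^ (a - 2)^-1).
have s0 : 0 < s by rewrite /s lt_min invr_gt0 ltr0n powR_gt0.
have sh : s <= 2^-1 by rewrite /s ge_min lexx.
have sE : s `^ (a - 2) <= c.
  have -> : c = (c `^ (a - 2)^-1) `^ (a - 2).
    by rewrite -powRrM mulVf ?gt_eqF // powRr1 // ltW.
  apply: ge0_ler_powR; [exact: ltW | by rewrite nnegrE ltW | by rewrite nnegrE powR_ge0 |].
  by rewrite /s ge_min lexx orbT.
have sa : s `^ a = s ^+ 2 * s `^ (a - 2).
  have := @powRD _ s (a - 2) 2%:R; rewrite subrK => ->; last first.
    by apply/implyP => _; rewrite gt_eqF.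
  by rewrite powR_mulrn ?ltW // mulrC.
set t := s / 2.
have t0 : 0 < t by rewrite /t divr_gt0.
have ts : t `^ a <= s `^ a.
  apply: ge0_ler_powR; [exact: ltW | by rewrite nnegrE ltW | by rewrite nnegrE ltW |].
  rewrite /t; lra.
set r := (1 - 3 * s / 2) / n.+1%:R.
have r0 : 0 < r by rewrite /r divr_gt0 ?ltr0n //; lra.
have hr : r *+ n.+1 = 1 - 3 * s / 2.
  by rewrite -mulr_natr /r divfK // pnatr_eq0.
have r1 : r < 1.
  have : 0 <= r *+ n by rewrite mulrn_wge0 // ltW.
  move: hr; rewrite mulrS; lra.
pose P (k : nat) := if k == 0%N then t else if k == 1%N then s else r.
pose Q (k : nat) := if k == 0%N then s else if k == 1%N then t else r.
have PQ2 : forall i, (2 <= i)%N -> P i = r /\ Q i = r.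
  by move=> [|[|i]].
exists (fun k : 'I_n.+3 => P k); exists (fun k : 'I_n.+3 => Q k).
have relP : forall F : nat -> R, F 0%N + F 1%N = s + t -> (forall i, (2 <= i)%N -> F i = r) ->
    (forall k, 0 < F k < 1) -> relint_simplex (fun k : 'I_n.+3 => F k).
  move=> F h01 h2 hk; split => [k|]; first exact: hk.
  rewrite sum3 (tail3 h2) h01 hr /t; lra.
have st1 : s < 1 by lra.
have tt1 : t < 1 by rewrite /t; lra.
split.
  apply: relP => //; first by rewrite /P /= addrC.
    by move=> i /PQ2 [].
  by move=> [|[|k]]; rewrite /P /= ?t0 ?s0 ?r0 ?tt1 ?st1 ?r1.
split.
  apply: relP => //; first by move=> i /PQ2 [].
  by move=> [|[|k]]; rewrite /Q /= ?t0 ?s0 ?r0 ?tt1 ?st1 ?r1.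
have hl : l1_dist (fun k : 'I_n.+3 => P k) (fun k => Q k) = s.
  rewrite /l1_dist (sum3 (fun k => `|P k - Q k|)).
  rewrite (tail3 (c := 0)); last by move=> i /PQ2 [-> ->]; rewrite subrr normr0.
  rewrite mul0rn addr0 /P /Q /=.
  rewrite ler0_norm ?ger0_norm /t; lra.
rewrite hl /alpha_div.
set G := fun k : nat => (P k `^ a + (a - 1) * Q k `^ a - a * P k * Q k `^ (a - 1)) / (a - 1).
rewrite (sum3 G) (tail3 (c := 0)); last first.
  move=> i /PQ2 [hp hq]; rewrite /G hp hq -mulrA mulr_powRB1 ?ltW //.
  have -> : r `^ a + (a - 1) * r `^ a - a * r `^ a = 0 by ring.
  by rewrite mul0r.
rewrite mul0rn addr0 /G /P /Q /=.
set A := s `^ a; set B := t `^ a.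
have C0 : 0 <= t * s `^ (a - 1) by rewrite mulr_ge0 ?powR_ge0 ?ltW.
have D0 : 0 <= s * t `^ (a - 1) by rewrite mulr_ge0 ?powR_ge0 ?ltW.
have a10 : a - 1 != 0 by rewrite subr_eq0 gt_eqF.
have ane : a != 0 by rewrite gt_eqF.
have -> : a^-1 * ((B + (a - 1) * A - a * t * s `^ (a - 1)) / (a - 1) +
    (A + (a - 1) * B - a * s * t `^ (a - 1)) / (a - 1)) =
    (A + B - t * s `^ (a - 1) - s * t `^ (a - 1)) / (a - 1).
  by rewrite alg // addrC.
have ia : 0 < (a - 1)^-1 by rewrite invr_gt0 subr_gt0.
have h1 : (A + B - t * s `^ (a - 1) - s * t `^ (a - 1)) / (a - 1) <= 2 * A / (a - 1).
  rewrite ler_pM2r // /A /B; lra.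
apply: (le_lt_trans h1).
rewrite /A sa.
have s20 : 0 < s ^+ 2 by rewrite exprn_gt0.
apply: (@le_lt_trans _ _ (2 * (s ^+ 2 * c) / (a - 1))).
  by rewrite ler_pM2r // ler_pM2l // ler_pM2l.
have -> : 2 * (s ^+ 2 * c) / (a - 1) = eps * s ^+ 2 / 2 by rewrite /c; field; rewrite a10.
have : 0 < eps * s ^+ 2 by rewrite mulr_gt0.
lra.
Qed.
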